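(* Let $\mathcal{A}$ and $\mathcal{U}$ be Banach algebras, $\theta$ a nonzero character on $\mathcal{A}$, and regard $\mathcal{U}$ as a Banach $(\mathcal{A}\times_{\theta}\mathcal{U})$-bimodule via $(a,u)\cdot v=\theta(a)v+uv$, $v\cdot(a,u)=\theta(a)v+vu$. Let $D:\mathcal{A}\times_{\theta}\mathcal{U}\to\mathcal{U}$ be a derivation and $\delta_1(a)=D((a,0))$, $\delta_2(u)=D((0,u))$. Then: (i) $\mathfrak{S}(\delta_1)$ is an $\mathcal{A}$-subbimodule of $\mathcal{U}$ and $\mathfrak{S}(\delta_2)$ is an ideal in $\mathcal{U}$; in particular $\mathcal{A}\cdot\mathfrak{S}(\delta_2)=\mathfrak{S}(\delta_2)\cdot\mathcal{A}=\theta(\mathcal{A})\mathfrak{S}(\delta_2)$; (ii) $\mathcal{U}\mathfrak{S}(\delta_1)=\mathfrak{S}(\delta_1)\mathcal{U}=\{0\}$.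
   Context: The Lau product $\mathcal{A}\times_{\theta}\mathcal{U}$ is $\mathcal{A}\times\mathcal{U}$ with norm $\|(a,u)\|=\|a\|+\|u\|$ and product $(a,u)(a',u')=(aa',\theta(a)u'+\theta(a')u+uu')$. The induced $\mathcal{A}$-bimodule structure on $\mathcal{U}$ is $a\cdot v=v\cdot a=\theta(a)v$. For a linear map $T:\mathcal{E}\to\mathcal{F}$ between Banach spaces, $\mathfrak{S}(T)=\{y\in\mathcal{F}:\exists (x_n)\subseteq\mathcal{E},\ x_n\to0,\ T(x_n)\to y\}$. *)

(* Defs.v *)
From mathcomp Require Import all_boot all_order all_algebra.
From mathcomp Require Import all_classical all_reals all_analysis.
Set Implicit Arguments. Unset Strict Implicit. Unset Printing Implicit Defensive.
Import Order.TTheory GRing.Theory Num.Theory.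
Import numFieldNormedType.Exports.
Local Open Scope classical_set_scope.
Local Open Scope ring_scope.

Definition is_banach_mul {K : numFieldType} {V : normedModType K}
  (mul : V -> V -> V) : Prop :=
  (forall x y z, mul x (mul y z) = mul (mul x y) z) /\
  [/\ (forall x y z, mul (x + y) z = mul x z + mul y z),
      (forall x y z, mul x (y + z) = mul x y + mul x z),
      (forall (k : K) x y, mul (k *: x) y = k *: mul x y),
      (forall (k : K) x y, mul x (k *: y) = k *: mul x y)
    & (forall x y, `|mul x y| <= `|x| * `|y|)].

(* A character: a multiplicative linear functional (nonzero-ness is stated
   separately). *)
Definition is_character {K : numFieldType} {V : normedModType K}
  (mul : V -> V -> V) (theta : V -> K) : Prop :=
  [/\ (forall x y, theta (x + y) = theta x + theta y),
      (forall (k : K) x, theta (k *: x) = k * theta x)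
    & (forall x y, theta (mul x y) = theta x * theta y)].

Section Lau.
Context {K : numFieldType} {A U : normedModType K}
  (mulA : A -> A -> A) (mulU : U -> U -> U) (theta : A -> K).

Definition lau_mul (p q : A * U) : A * U :=
  (mulA p.1 q.1, theta p.1 *: q.2 + theta q.1 *: p.2 + mulU p.2 q.2).

Definition lau_lact (p : A * U) (v : U) : U := theta p.1 *: v + mulU p.2 v.
Definition lau_ract (v : U) (p : A * U) : U := theta p.1 *: v + mulU v p.2.

Definition is_lau_derivation (D : A * U -> U) : Prop :=
  [/\ (forall p q : A * U, D (p.1 + q.1, p.2 + q.2) = D p + D q),
      (forall (k : K) (p : A * U), D (k *: p.1, k *: p.2) = k *: D p)
    & (forall p q : A * U,
         D (lau_mul p q) = lau_lact p (D q) + lau_ract (D p) q)].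

Definition theta_lact (a : A) (v : U) : U := theta a *: v.
Definition theta_ract (v : U) (a : A) : U := theta a *: v.
End Lau.

Definition sep_space {K : numFieldType} {E F : normedModType K}
  (T : E -> F) : set F :=
  [set y | exists x : nat -> E, x @ \oo --> (0 : E) /\ (T \o x) @ \oo --> y].

Definition is_subspace {K : numFieldType} {V : normedModType K} (S : set V) : Prop :=
  [/\ S 0, (forall x y, S x -> S y -> S (x + y))
    & (forall (k : K) x, S x -> S (k *: x))].

(* Main.v *)
Require Import Defs.
From mathcomp Require Import all_boot all_order all_algebra.
From mathcomp Require Import all_classical all_reals all_analysis.
Import Order.TTheory GRing.Theory Num.Theory.
Import numFieldNormedType.Exports.
Local Open Scope classical_set_scope.
Local Open Scope ring_scope.

Section Helpers.
Context {K : numFieldType}.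

Lemma bound_cvg0 {V W : normedModType K} (g : nat -> W) (h : nat -> V) (c : K) :
  0 <= c -> (forall n, `|g n| <= c * `|h n|) -> h @ \oo --> 0 -> g @ \oo --> 0.
Proof.
move=> c0 Hb /cvgr0Pnorm_lt Hh; apply/cvgr0Pnorm_lt => eps eps0.
have c1 : 0 < c + 1 by rewrite ltr_wpDl.
have e' : 0 < eps / (c + 1) by rewrite divr_gt0.
near=> n.
have hn : `|h n| < eps / (c + 1) by near: n; exact: Hh.
apply: (le_lt_trans (Hb n)).
apply: (@le_lt_trans _ _ ((c + 1) * `|h n|)).
  by rewrite ler_wpM2r // lerDl.
rewrite -[X in _ < X](@divfK _ (c + 1)) ?gt_eqF // [X in _ < X]mulrC.
by rewrite ltr_pM2l.
Unshelve. all: by end_near.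
Qed.

Lemma mul_facts {V : normedModType K} (m : V -> V -> V) : is_banach_mul m ->
  [/\ forall x, m x 0 = 0, forall x, m 0 x = 0,
      forall x y, m x (- y) = - m x y & forall x y, m (- x) y = - m x y].
Proof.
move=> [_ [_ _ Hl Hr _]]; split.
- by move=> x; have := Hr 0 x 0; rewrite !scale0r.
- by move=> x; have := Hl 0 0 x; rewrite !scale0r.
- by move=> x y; rewrite -scaleN1r Hr scaleN1r.
- by move=> x y; rewrite -scaleN1r Hl scaleN1r.
Qed.

Lemma mul_cvgl {V : normedModType K} (m : V -> V -> V) (u v : V) (f : nat -> V) :
  is_banach_mul m -> f @ \oo --> v -> (fun n => m u (f n)) @ \oo --> m u v.
Proof.
move=> Hm Hf; have [_ _ HN _] := mul_facts _ Hm.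
have [_ [_ Hd _ _ Hn]] := Hm.
apply/subr_cvg0; apply: (@bound_cvg0 _ _ _ (fun n => f n - v) `|u|) => //.
  by move=> n; rewrite -HN -Hd Hn.
exact/subr_cvg0.
Qed.

Lemma mul_cvgr {V : normedModType K} (m : V -> V -> V) (u v : V) (f : nat -> V) :
  is_banach_mul m -> f @ \oo --> v -> (fun n => m (f n) u) @ \oo --> m v u.
Proof.
move=> Hm Hf; have [_ _ _ HN] := mul_facts _ Hm.
have [_ [Hd _ _ _ Hn]] := Hm.
apply/subr_cvg0; apply: (@bound_cvg0 _ _ _ (fun n => f n - v) `|u|) => //.
  by move=> n; rewrite -HN -Hd mulrC Hn.
exact/subr_cvg0.
Qed.

Lemma sep_subspace {E F : normedModType K} (T : E -> F) :
  (forall x y, T (x + y) = T x + T y) -> (forall k x, T (k *: x) = k *: T x) ->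
  is_subspace (sep_space T).
Proof.
move=> Ta Ts; split.
- exists (fun _ => 0); split; first exact: cvg_cst.
  have -> : T \o (fun _ : nat => (0:E)) = fun _ => 0.
    by apply/funext => n /=; rewrite -(scale0r (0:E)) Ts scale0r.
  exact: cvg_cst.
- move=> y1 y2 [x1 [H1 H1']] [x2 [H2 H2']].
  exists (fun n => x1 n + x2 n); split.
    by rewrite -(addr0 (0:E)); exact: cvgD.
  have -> : T \o (fun n => x1 n + x2 n) = fun n => T (x1 n) + T (x2 n).
    by apply/funext => n /=; rewrite Ta.
  exact: cvgD.
- move=> k y [x [H H']]; exists (fun n => k *: x n); split.
    by rewrite -(scaler0 _ k); exact: cvgZl_tmp.
  have -> : T \o (fun n => k *: x n) = fun n => k *: T (x n).
    by apply/funext => n /=; rewrite Ts.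
  exact: cvgZl_tmp.
Qed.

End Helpers.

Theorem theorem2p20 (K : numFieldType) (A U : completeNormedModType K)
  (mulA : A -> A -> A) (mulU : U -> U -> U) (theta : A -> K)
  (D : A * U -> U) :
  is_banach_mul mulA -> is_banach_mul mulU ->
  is_character mulA theta -> (exists a, theta a != 0) ->
  is_lau_derivation mulA mulU theta D ->
  let delta1 := fun a : A => D (a, 0) in
  let delta2 := fun u : U => D (0, u) in
  let S1 := sep_space delta1 in
  let S2 := sep_space delta2 in
  (* (i) S1 is an A-subbimodule of U *)
  (is_subspace S1 /\
   (forall a v, S1 v -> S1 (theta_lact theta a v)) /\
   (forall a v, S1 v -> S1 (theta_ract theta v a))) /\
  (* (i) S2 is an ideal of U *)
  (is_subspace S2 /\
   (forall u v, S2 v -> S2 (mulU u v)) /\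
   (forall u v, S2 v -> S2 (mulU v u))) /\
  (* (i) A . S2 = S2 . A = theta(A) S2 *)
  ([set theta_lact theta a v | a in [set: A] & v in S2] =
     [set theta_ract theta v a | v in S2 & a in [set: A]] /\
   [set theta_ract theta v a | v in S2 & a in [set: A]] =
     [set k *: v | k in theta @` [set: A] & v in S2]) /\
  (* (ii) U S1 = S1 U = {0} *)
  ([set mulU u v | u in [set: U] & v in S1] = [set 0] /\
   [set mulU v u | v in S1 & u in [set: U]] = [set 0]).
Proof.
move=> HA HU [th_add th_s th_m] _ [HDa HDs HDm] delta1 delta2 S1 S2.
have [mA0r mA0l _ _] := mul_facts _ HA.
have [mU0r mU0l _ _] := mul_facts _ HU.
have th0 : theta 0 = 0 by rewrite -(scale0r (0:A)) th_s mul0r.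
have d1a : forall a b, delta1 (a + b) = delta1 a + delta1 b.
  by move=> a b; have := HDa (a, 0) (b, 0); rewrite /= addr0.
have d1s : forall k a, delta1 (k *: a) = k *: delta1 a.
  by move=> k a; have := HDs k (a, 0); rewrite /= scaler0.
have d2a : forall a b, delta2 (a + b) = delta2 a + delta2 b.
  by move=> a b; have := HDa (0, a) (0, b); rewrite /= addr0.
have d2s : forall k a, delta2 (k *: a) = k *: delta2 a.
  by move=> k a; have := HDs k (0, a); rewrite /= scaler0.
have sub1 : is_subspace S1 by exact: sep_subspace.
have sub2 : is_subspace S2 by exact: sep_subspace.
have [_ _ sc1] := sub1; have [_ _ sc2] := sub2.
have Pu2 : forall u x, delta2 (mulU u x) = mulU u (delta2 x) + mulU (delta2 u) x.
  move=> u x; rewrite /delta2; have := HDm (0, u) (0, x).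
  rewrite /lau_mul /lau_lact /lau_ract /= th0 mA0l !scale0r !add0r => ->.
  by [].
have Pv2 : forall u x, delta2 (mulU x u) = mulU (delta2 x) u + mulU x (delta2 u).
  move=> u x; rewrite /delta2; have := HDm (0, x) (0, u).
  rewrite /lau_mul /lau_lact /lau_ract /= th0 mA0l !scale0r !add0r => ->; rewrite addrC.
  by [].
have d2s' : forall k u, D (0, k *: u) = k *: D (0, u).
  by move=> k u; have := HDs k (0, u); rewrite /= scaler0.
have K1 : forall u a, mulU u (delta1 a) = 0.
  move=> u a; rewrite /delta1 /delta2; have := HDm (0, u) (a, 0).
  rewrite /lau_mul /lau_lact /lau_ract /= th0 mA0l mU0r !scale0r add0r addr0.
  rewrite d2s' add0r mU0r addr0 => /(congr1 (fun w => w - theta a *: D (0, u))).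
  by rewrite subrr addrK.
have K2 : forall u a, mulU (delta1 a) u = 0.
  move=> u a; rewrite /delta1 /delta2; have := HDm (a, 0) (0, u).
  rewrite /lau_mul /lau_lact /lau_ract /= th0 mA0r mU0l !scale0r add0r !addr0.
  rewrite d2s' mU0l addr0 => /(congr1 (fun w => w - theta a *: D (0, u))).
  by rewrite subrr addrC addKr.
have Z1 : forall u v, S1 v -> mulU u v = 0.
  move=> u v [x [_ Hx]].
  have := @mul_cvgl K U mulU u _ _ HU Hx.
  have -> : (fun n => mulU u ((delta1 \o x) n)) = fun _ => 0.
    by apply/funext => n /=; rewrite K1.
  by move=> H; apply: (cvg_unique (@norm_hausdorff K U) H); exact: cvg_cst.
have Z2 : forall u v, S1 v -> mulU v u = 0.
  move=> u v [x [_ Hx]].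
  have := @mul_cvgr K U mulU u _ _ HU Hx.
  have -> : (fun n => mulU ((delta1 \o x) n) u) = fun _ => 0.
    by apply/funext => n /=; rewrite K2.
  by move=> H; apply: (cvg_unique (@norm_hausdorff K U) H); exact: cvg_cst.
split; [split; [exact: sub1|split=> a v Hv; exact: sc1]|].
split; [split; [exact: sub2|split]|].
- move=> u v [x [Hx Hdx]]; exists (fun n => mulU u (x n)); split.
    by rewrite -(mU0r u); exact: mul_cvgl.
  have -> : delta2 \o (fun n => mulU u (x n)) =
    fun n => mulU u (delta2 (x n)) + mulU (delta2 u) (x n).
    by apply/funext => n /=; rewrite Pu2.
  rewrite -[mulU u v]addr0 -(mU0r (delta2 u)).
  by apply: cvgD; [exact: mul_cvgl | exact: mul_cvgl].
- move=> u v [x [Hx Hdx]]; exists (fun n => mulU (x n) u); split.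
    by rewrite -(mU0l u); exact: mul_cvgr.
  have -> : delta2 \o (fun n => mulU (x n) u) =
    fun n => mulU (delta2 (x n)) u + mulU (x n) (delta2 u).
    by apply/funext => n /=; rewrite Pv2.
  rewrite -[mulU v u]addr0 -(mU0l (delta2 u)).
  by apply: cvgD; [exact: mul_cvgr | exact: mul_cvgr].
split; [split|split].
- apply/seteqP; split=> w.
    by move=> [a _ [v Hv <-]]; exists v => //; exists a.
  by move=> [v Hv [a _ <-]]; exists a => //; exists v.
- apply/seteqP; split=> w.
    by move=> [v Hv [a _ <-]]; exists (theta a); [exists a|exists v].
  by move=> [k [a _ <-] [v Hv <-]]; exists v => //; exists a.
- apply/seteqP; split=> w.
    by move=> [u _ [v Hv <-]]; rewrite /= (Z1 _ _ Hv).
  move=> ->; exists 0 => //; exists 0; last by rewrite mU0r.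
  by have [] := sub1.
- apply/seteqP; split=> w.
    by move=> [v Hv [u _ <-]]; rewrite /= (Z2 _ _ Hv).
  move=> ->; exists 0; first by have [] := sub1.
  by exists 0 => //; rewrite mU0l.
Qed.
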